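(* For every $\epsilon>0$ there is an instance with uniform weights on which $$\mathrm{opt}_M\text{-}\mathrm{MAX}=\mathrm{opt}_M\text{-}\mathrm{SUM}\ \ge\ (2-\epsilon)\,\mathrm{opt}\text{-}\mathrm{MAX}=(2-\epsilon)\,\mathrm{opt}\text{-}\mathrm{SUM}.$$
   Context: An instance consists of a finite set $E$ of $n$ elements and $m$ tests, test $i$ being a subset $s_i\subseteq E$, with element weights $p_e$; uniform weights mean $p_e=1/n$ for SUM objectives and $p_e=1$ for MAX objectives. A schedule is an infinite test sequence; stochastic schedules choose $\sigma_t$ randomly depending on the past; memoryless schedules draw each $\sigma_t$ i.i.d. from a distribution $q$ on tests. Detection time $T(e,t)=\mathbb{E}[1+\min\{h\ge0:e\in s_{\sigma_{t+h}}\}]$, $E_t[e]=\lim_H\frac1H\sum_{t\le H}T(e,t)$; valid schedules have $\sup_tT(e,t)<\infty$, $E_t[e]$ existing for all $e$, and convergent test frequencies. $\mathrm{opt}\text{-}\mathrm{SUM}$, $\mathrm{opt}\text{-}\mathrm{MAX}$: infima over valid stochastic schedules of $\sum_ep_eE_t[e]$ and $\max_ep_eE_t[e]$ respectively; $\mathrm{opt}_M\text{-}\mathrm{SUM}$, $\mathrm{opt}_M\text{-}\mathrm{MAX}$: the same infima over memoryless schedules. *)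

(* Defs.v *)
From HB Require Import structures.
From mathcomp Require Import all_boot all_order all_algebra.
From mathcomp Require Import all_classical all_reals all_analysis.
Set Implicit Arguments. Unset Strict Implicit. Unset Printing Implicit Defensive.
Import Order.TTheory GRing.Theory Num.Theory numFieldNormedType.Exports.
Local Open Scope ring_scope.
Local Open Scope classical_set_scope.

Section Sched.
Variable R : realType.
Variables (n m : nat) (s : 'I_m -> {set 'I_n}).

(* A stochastic schedule: given the past (the finite history of tests
   chosen so far), a probability distribution for the next test. *)
Definition schedule := seq 'I_m -> 'I_m -> R.

Definition is_stochastic (sc : schedule) : Prop :=
  (forall h j, 0 <= sc h j) /\ (forall h, \sum_(j : 'I_m) sc h j = 1).

Definition memoryless (sc : schedule) : Prop :=
  exists q : 'I_m -> R, forall h, sc h = q.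

Fixpoint pr_from (sc : schedule) (h : seq 'I_m) (w : seq 'I_m) : R :=
  match w with
  | [::] => 1
  | j :: w' => sc h j * pr_from sc (rcons h j) w'
  end.
Definition pr (sc : schedule) (w : seq 'I_m) : R := pr_from sc [::] w.

(* probability that, from time t on, e is first detected at time t + k
   (i.e. min{h >= 0 : e \in s (sigma_(t+h))} = k); times are 0-based *)
Definition P_first (sc : schedule) (e : 'I_n) (t k : nat) : R :=
  \sum_(w : (t + k).+1.-tuple 'I_m |
        [forall i : 'I_(t + k).+1, ((t <= i < t + k)%N) ==> (e \notin s (tnth w i))]
        && (e \in s (tnth w ord_max)))
    pr sc w.

(* detection time T(e,t) = E[1 + min{h >= 0 : e \in s (sigma_(t+h))}],
   which is +oo if with positive probability e is never detected *)
Definition T_det (sc : schedule) (e : 'I_n) (t : nat) : \bar R :=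
  if ((\sum_(k <oo) (P_first sc e t k)%:E)%E == 1%E)
  then (\sum_(k <oo) ((k.+1)%:R * P_first sc e t k)%:E)%E
  else +oo%E.

Definition P_test (sc : schedule) (i : 'I_m) (t : nat) : R :=
  \sum_(w : t.+1.-tuple 'I_m | tnth w ord_max == i) pr sc w.

Definition cesaro (u : nat -> R) (H : nat) : R :=
  (\sum_(t < H.+1) u t) / H.+1%:R.

Definition Treal (sc : schedule) (e : 'I_n) (t : nat) : R := fine (T_det sc e t).

Definition valid (sc : schedule) : Prop :=
  [/\ is_stochastic sc,
      (exists B : R, forall e t, (T_det sc e t <= B%:E)%E),
      (forall e, cvgn (cesaro (Treal sc e))) &
      (forall i, cvgn (cesaro (P_test sc i)))].

Definition Et (sc : schedule) (e : 'I_n) : R := limn (cesaro (Treal sc e)).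

(* uniform weights: p_e = 1/n for SUM, p_e = 1 for MAX *)
Definition obj_SUM (sc : schedule) : R := \sum_(e : 'I_n) n%:R^-1 * Et sc e.
Definition obj_MAX (sc : schedule) : R := \big[Num.max/0]_(e : 'I_n) Et sc e.

Definition opt_SUM : \bar R :=
  ereal_inf [set (obj_SUM sc)%:E | sc in [set sc | valid sc]].
Definition opt_MAX : \bar R :=
  ereal_inf [set (obj_MAX sc)%:E | sc in [set sc | valid sc]].
Definition optM_SUM : \bar R :=
  ereal_inf [set (obj_SUM sc)%:E | sc in [set sc | valid sc /\ memoryless sc]].
Definition optM_MAX : \bar R :=
  ereal_inf [set (obj_MAX sc)%:E | sc in [set sc | valid sc /\ memoryless sc]].

End Sched.

(* Main.v *)
Require Import Defs.
From HB Require Import structures.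
From mathcomp Require Import all_boot all_order all_algebra.
From mathcomp Require Import all_classical all_reals all_analysis.
From mathcomp Require Import ring lra zify.
Import Order.TTheory GRing.Theory Num.Theory numFieldNormedType.Exports.
Set Implicit Arguments. Unset Strict Implicit.
Local Open Scope ring_scope.

Section A.
Variable R : realType.

Lemma sum_tupleS (T : finType) k (F : k.+1.-tuple T -> R) :
  \sum_(w : k.+1.-tuple T) F w = \sum_(j : T) \sum_(w : k.-tuple T) F [tuple of j :: w].
Proof.
rewrite pair_big /=.
rewrite (reindex (fun p : T * k.-tuple T => [tuple of p.1 :: p.2])) //=.
exists (fun w : k.+1.-tuple T => (thead w, [tuple of behead w])).
  by move=> [j w] _ /=; congr pair; apply: val_inj.
by move=> w _; apply: val_inj => /=; case: w => [[|x w] //=].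
Qed.

Lemma sum_tuple0 (T : finType) (F : 0.-tuple T -> R) :
  \sum_(w : 0.-tuple T) F w = F [tuple].
Proof.
rewrite (big_pred1 [tuple]) // => w /=; rewrite [w]tuple0; exact/esym/eqP.
Qed.

Variable m : nat.
Implicit Types sc : schedule R m.

Lemma pr_from_ge0 sc : is_stochastic sc -> forall h w, 0 <= pr_from sc h w.
Proof.
move=> [H0 _] h w; elim: w h => [|j w IH] h //=.
by rewrite mulr_ge0.
Qed.

Lemma sum_pr_from sc : is_stochastic sc -> forall k h,
  \sum_(w : k.-tuple 'I_m) pr_from sc h w = 1.
Proof.
move=> [H0 H1]; elim=> [|k IH] h; first by rewrite sum_tuple0.
rewrite sum_tupleS -(H1 h); apply: eq_bigr => j _ /=.
by rewrite -big_distrr /= IH mulr1.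
Qed.

Lemma prod_tuple k (f : nat -> 'I_m -> R) :
  \sum_(w : k.-tuple 'I_m) \prod_(i < k) f i (tnth w i)
  = \prod_(i < k) \sum_(j : 'I_m) f i j.
Proof.
elim: k f => [|k IH] f; first by rewrite sum_tuple0 !big_ord0.
rewrite sum_tupleS big_ord_recl /= big_distrl /=; apply: eq_bigr => j _.
rewrite -(IH (fun i => f i.+1)) big_distrr /=; apply: eq_bigr => w _.
by rewrite big_ord_recl /=; congr (_ * _); apply: eq_bigr => i _; rewrite tnthS.
Qed.

End A.

Section B.
Variable R : realType.
Implicit Types P : nat -> R.

Lemma abel_fin P K : \sum_(k < K) (k.+1)%:R * P k =
  \sum_(i < K) (1 - \sum_(j < i) P j) - K%:R * (1 - \sum_(j < K) P j).
Proof.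
elim: K => [|K IH]; first by rewrite !big_ord0 mul0r subr0.
rewrite !big_ord_recr /= IH.
set A := \sum_(i < K) _; set B := \sum_(i < K) _.
rewrite -[K.+1]addn1 !natrD; lra.
Qed.

Lemma tail_eq P K : (forall k, 0 <= P k) ->
  (\sum_(k <oo) (P k)%:E = 1)%E ->
  (\sum_(K <= k <oo) (P k)%:E = (1 - \sum_(j < K) P j)%:E)%E.
Proof.
move=> P0 HP.
move: HP; rewrite (@nneseries_split _ _ 0 K); last by move=> k _; rewrite lee_fin.
rewrite add0n sumEFin big_mkord => h.
rewrite EFinB -h [((_)%:E + _)%E]addeC addeK //.
Qed.

Lemma psum_le1 P K : (forall k, 0 <= P k) ->
  (\sum_(k <oo) (P k)%:E = 1)%E -> \sum_(j < K) P j <= 1.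
Proof.
move=> P0 HP; rewrite -lee_fin -HP -sumEFin -(big_mkord xpredT (fun j => (P j)%:E)).
by apply: (@nneseries_lim_ge _ _ xpredT 0 K) => k _ _; rewrite lee_fin.
Qed.

Lemma abel_lb P : (forall k, 0 <= P k) ->
  (\sum_(k <oo) (P k)%:E = 1)%E -> forall K,
  ((\sum_(i < K) (1 - \sum_(j < i) P j))%:E <=
     \sum_(k <oo) ((k.+1)%:R * P k)%:E)%E.
Proof.
move=> P0 HP K.
rewrite (@nneseries_split _ _ 0 K); last by move=> k _; rewrite lee_fin mulr_ge0.
rewrite add0n sumEFin big_mkord abel_fin.
set A := \sum_(i < K) _; set F := 1 - _.
rewrite -[in X in (X <= _)%E](subrK (K%:R * F) A) EFinD EFinM; apply: leeD2l.
rewrite -(@tail_eq P K P0 HP) -nneseriesZl; last by move=> i _; rewrite lee_fin.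
rewrite eseries_cond [in X in (_ <= X)%E]eseries_cond; apply: lee_nneseries.
  by move=> i _ _; rewrite -EFinM lee_fin mulr_ge0.
move=> i /= Ki; rewrite -EFinM lee_fin ler_wpM2r // ler_nat.
exact: leqW.
Qed.

Lemma abel_ub P (c : R) : (forall k, 0 <= P k) ->
  (\sum_(k <oo) (P k)%:E = 1)%E ->
  (forall K, \sum_(i < K) (1 - \sum_(j < i) P j) <= c) ->
  (\sum_(k <oo) ((k.+1)%:R * P k)%:E <= c%:E)%E.
Proof.
move=> P0 HP Hc.
apply: lime_le; first by apply: is_cvg_nneseries => k _ _; rewrite lee_fin mulr_ge0.
apply: nearW => K /=; rewrite sumEFin big_mkord lee_fin abel_fin.
apply: le_trans (Hc K); rewrite gerBl mulr_ge0 // subr_ge0.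
exact: psum_le1.
Qed.

End B.

Section C.
Variable R : realType.
Variables (n m : nat) (s : 'I_m -> {set 'I_n}).
Implicit Types sc : schedule R m.

Lemma P_first_ge0 sc e t k : is_stochastic sc -> 0 <= P_first s sc e t k.
Proof. by move=> Hs; apply: sumr_ge0 => w _; exact: pr_from_ge0. Qed.

Lemma T_fin sc e t B : (T_det s sc e t <= B%:E)%E ->
  (\sum_(k <oo) (P_first s sc e t k)%:E = 1)%E /\
  T_det s sc e t = (\sum_(k <oo) ((k.+1)%:R * P_first s sc e t k)%:E)%E.
Proof.
rewrite /T_det; case: ifP => [/eqP -> //|_]; by rewrite leye_eq.
Qed.

Lemma Treal_E sc e t B : is_stochastic sc -> (T_det s sc e t <= B%:E)%E ->
  (Treal s sc e t)%:E = T_det s sc e t.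
Proof.
move=> Hs HB; rewrite /Treal fineK //.
have [_ ->] := T_fin HB.
rewrite ge0_fin_numE; last by apply: nneseries_ge0 => k _ _; rewrite lee_fin mulr_ge0 // P_first_ge0.
have [_ <-] := T_fin HB; exact: le_lt_trans HB (ltry _).
Qed.

Lemma Treal_ge sc e t B : is_stochastic sc -> (T_det s sc e t <= B%:E)%E ->
  forall K, \sum_(i < K) (1 - \sum_(j < i) P_first s sc e t j) <= Treal s sc e t.
Proof.
move=> Hs HB K; rewrite -lee_fin (Treal_E Hs HB).
have [H1 ->] := T_fin HB.
apply: abel_lb => // k; exact: P_first_ge0.
Qed.

End C.

Definition sing (N : nat) : 'I_N -> {set 'I_N} := fun i => [set i].
Arguments sing : clear implicits.

Lemma sum_Pfirst_le1 (R : realType) N (sc : schedule R N) t j : is_stochastic sc ->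
  \sum_(e : 'I_N) P_first (sing N) sc e t j <= 1.
Proof.
move=> Hs; rewrite /P_first.
under eq_bigr do rewrite big_mkcond.
rewrite exchange_big /= -(sum_pr_from Hs (t + j).+1 [::]).
apply: ler_sum => w _.
rewrite (bigD1 (tnth w ord_max)) //= big1 ?addr0.
  by case: ifP => _ //; exact: pr_from_ge0.
move=> e /negbTE ne; case: ifP => // /andP[_]; by rewrite /sing finset.in_set1 ne.
Qed.

Lemma sumT_lb (R : realType) N (sc : schedule R N) B : is_stochastic sc ->
  (forall e t, (T_det (sing N) sc e t <= B%:E)%E) -> forall t,
  \sum_(i < N) (N%:R - i%:R) <= \sum_(e : 'I_N) Treal (sing N) sc e t.
Proof.
move=> Hs HB t.
apply: (@le_trans _ _ (\sum_(e : 'I_N) \sum_(i < N) (1 - \sum_(j < i) P_first (sing N) sc e t j))); last by apply: ler_sum => e _; exact: Treal_ge.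
rewrite exchange_big /=; apply: ler_sum => i _.
rewrite sumrB sumr_const card_ord lerD2l lerN2 exchange_big /=.
apply: (@le_trans _ _ (\sum_(j < i) 1)); first by apply: ler_sum => j _; exact: sum_Pfirst_le1.
by rewrite sumr_const card_ord.
Qed.

Lemma objSUM_lb (R : realType) N (sc : schedule R N) : (0 < N)%N ->
  valid (sing N) sc ->
  N%:R^-1 * \sum_(i < N) (N%:R - i%:R) <= obj_SUM (sing N) sc.
Proof.
move=> N0 [Hs [B HB] Hc _].
set c := \sum_(i < N) _.
set g := fun H => \sum_(e : 'I_N) N%:R^-1 * Defs.cesaro (Treal (sing N) sc e) H.
have gc : (g @ \oo --> obj_SUM (sing N) sc)%classic.
  apply: (@cvg_big _ _ +%R 0 xpredT add_continuous).
  move=> e _; apply: cvgMl_tmp; exact: Hc.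
rewrite -(cvg_lim _ gc) //.
apply: limr_ge; first by apply/cvg_ex; exists (obj_SUM (sing N) sc).
apply: nearW => H.
rewrite /g /Defs.cesaro -mulr_sumr; apply: ler_wpM2l; first by rewrite invr_ge0.
rewrite -mulr_suml exchange_big /= ler_pdivlMr ?ltr0Sn //.
apply: (@le_trans _ _ (\sum_(t < H.+1) c)); last by apply: ler_sum => t _; exact: (sumT_lb Hs HB t).
by rewrite sumr_const card_ord mulr_natr.
Qed.

Lemma series_fin (R : realType) (f : nat -> R) M : (forall k, 0 <= f k) ->
  (forall k, (M <= k)%N -> f k = 0) ->
  (\sum_(k <oo) (f k)%:E = (\sum_(k < M) f k)%:E)%E.
Proof.
move=> f0 fM; rewrite (@nneseries_split _ _ 0 M); last by move=> k _; rewrite lee_fin.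
rewrite add0n eseries0 ?adde0 ?sumEFin ?big_mkord // => k Mk _; by rewrite fM.
Qed.

Section D.
Variables (R : realType) (N : nat).

Definition rrs : schedule R N.+1 := fun h j =>
  match h with
  | [::] => N.+1%:R^-1
  | x :: h' => (nat_of_bool (val j == (val (last x h')).+1 %% N.+1)%N)%:R
  end.

Lemma rrs_stoch : is_stochastic rrs.
Proof.
split; first by case=> [|x h] j //=; rewrite ?invr_ge0 ler0n.
case=> [|x h] /=.
  by rewrite sumr_const card_ord -[_ *+ N.+1]mulr_natr mulVf // pnatr_eq0.
have lt : ((val (last x h)).+1 %% N.+1 < N.+1)%N by rewrite ltn_mod.
rewrite (bigD1 (Ordinal lt)) //= eqxx big1 ?addr0 // => j nj.
by case: eqP => // ej; case/eqP: nj; apply: val_inj.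
Qed.

Definition cyc (a L : nat) := map (fun i => (a + i) %% N.+1)%N (iota 1 L).

Lemma pr_from_rrs x h w : pr_from rrs (x :: h) w =
  (nat_of_bool (map val w == cyc (last x h) (size w)))%:R.
Proof.
elim: w x h => [|j w IH] x h //=.
rewrite -rcons_cons IH last_rcons /cyc /= eqseq_cons.
rewrite addn1; case: eqP => [ej|_] /=; last by rewrite mul0r.
rewrite mul1r; congr ((nat_of_bool (_ == _))%:R).
rewrite -[2%N]/(1 + 1)%N iotaDl -map_comp; apply: eq_map => i /=.
by rewrite ej modnDml addnA addn1.
Qed.

Lemma count_one (x e : nat) : (e < N.+1)%N ->
  \sum_(j : 'I_N.+1) (nat_of_bool ((j + x) %% N.+1 == e)%N)%:R = 1 :> R.
Proof.
move=> eN.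
set r := ((e + N.+1 - x %% N.+1) %% N.+1)%N.
have rN : (r < N.+1)%N by rewrite ltn_mod.
have hr : ((r + x) %% N.+1 = e)%N.
  rewrite /r modnDml -modnDmr subnK; last first.
    by apply: leq_trans (ltnW (ltn_pmod _ _)) (leq_addl _ _).
  by rewrite modnDr modn_small.
rewrite (bigD1 (Ordinal rN)) //= hr eqxx big1 ?addr0 // => j nj.
case: eqP => // hj; case/eqP: nj; apply: val_inj => /=.
have : (j + x == r + x %[mod N.+1])%N by rewrite hj hr.
by rewrite eqn_modDr !modn_small // => /eqP.
Qed.


Lemma count_first (t k e : nat) : (e < N.+1)%N ->
  \sum_(j : 'I_N.+1) (nat_of_bool
     ([forall i : 'I_(t + k).+1, ((t <= i < t + k) ==> ((j + i) %% N.+1 != e))]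
      && ((j + (t + k)) %% N.+1 == e)))%N%:R
  = (nat_of_bool (k < N.+1)%N)%:R :> R.
Proof.
move=> eN; case: (ltnP k N.+1) => hk.
  transitivity (\sum_(j : 'I_N.+1) (nat_of_bool ((j + (t+k)) %% N.+1 == e)%N)%:R : R); last by rewrite count_one // hk.
  apply: eq_bigr => j _.
  case H: ((j + (t + k)) %% N.+1 == e)%N; rewrite ?andbF ?andbT //.
  rewrite (_ : [forall i : 'I_(t + k).+1, _] = true) //.
  apply/forallP => i; apply/implyP => /andP[ti ik]; apply/negP => /eqP hi.
  have : (j + i == j + (t + k) %[mod N.+1])%N by rewrite hi (eqP H).
  rewrite eqn_modDl eq_sym eqn_mod_dvd; last by lia.
  move=> /dvdn_leq; lia.
rewrite big1 // => j _.
case H: ((j + (t + k)) %% N.+1 == e)%N; rewrite ?andbF ?andbT //.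
have lt : (t + k - N.+1 < (t + k).+1)%N by lia.
case: forallP => // /(_ (Ordinal lt)) /implyP /= h.
have /h : (t <= t + k - N.+1 < t + k)%N by lia.
suff -> : ((j + (t + k - N.+1)) %% N.+1 = (j + (t + k)) %% N.+1)%N by rewrite H.
by rewrite -(modnDr (j + (t + k - N.+1))) -addnA subnK //; lia.
Qed.


Lemma size_ct (j : 'I_N.+1) L : size (map (@inord N) (cyc j L)) == L.
Proof. by rewrite size_map size_map size_iota. Qed.

Definition ct (j : 'I_N.+1) L : L.-tuple 'I_N.+1 := Tuple (size_ct j L).

Lemma map_val_ct j L : map val (ct j L) = cyc j L.
Proof.
rewrite /= -map_comp -[RHS]map_id; apply/eq_in_map => x /mapP[i _ ->] /=.
by rewrite inordK // ltn_mod.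
Qed.

Lemma tnth_ct j L (i : 'I_L.+1) :
  val (tnth [tuple of j :: ct j L] i) = ((j + i) %% N.+1)%N.
Proof.
rewrite (tnth_nth j) /=; case: i => [[|i] /= hi].
  by rewrite addn0 modn_small.
rewrite (nth_map 0%N); last by rewrite size_map size_iota.
rewrite /cyc (nth_map 0%N) ?size_iota // nth_iota // inordK ?ltn_mod // add1n.
Qed.

Lemma pr_rrs_cons L (j : 'I_N.+1) (w : L.-tuple 'I_N.+1) :
  pr rrs [tuple of j :: w] = N.+1%:R^-1 * (nat_of_bool (map val w == cyc j L))%:R.
Proof. by rewrite /pr /= pr_from_rrs /= size_tuple. Qed.

Lemma P_first_rrs (e : 'I_N.+1) t k :
  P_first (sing N.+1) rrs e t k = N.+1%:R^-1 * (nat_of_bool (k < N.+1)%N)%:R.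
Proof.
rewrite /P_first big_mkcond sum_tupleS -(count_first t k (ltn_ord e)) mulr_sumr.
apply: eq_bigr => j _.
rewrite (bigD1 (ct j (t + k))) //= big1 ?addr0.
  rewrite pr_rrs_cons map_val_ct eqxx mulr1.
  have -> : (e \in sing N.+1 (tnth [tuple of j :: ct j (t + k)] ord_max)) =
     ((j + (t + k)) %% N.+1 == e)%N.
    by rewrite /sing finset.in_set1 -(inj_eq val_inj) tnth_ct eq_sym.
  rewrite (_ : [forall i : 'I_(t + k).+1, _] = 
     [forall i : 'I_(t + k).+1, (t <= i < t + k)%N ==> ((j + i) %% N.+1 != e)%N]).
    by case: ifP => _; rewrite ?mulr0 ?mulr1.
  apply: eq_forallb => i.
  by rewrite /sing finset.in_set1 -(inj_eq val_inj) tnth_ct eq_sym.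
move=> w nw; case: ifP => // _.
rewrite pr_rrs_cons.
case: eqP => [hw|]; last by rewrite mulr0.
by case/eqP: nw; apply: val_inj; apply: (inj_map val_inj); rewrite hw map_val_ct.
Qed.


Definition Trr : R := N.+1%:R^-1 * \sum_(k < N.+1) (k.+1)%:R.

Lemma T_det_rrs e t : T_det (sing N.+1) rrs e t = Trr%:E.
Proof.
rewrite /T_det (@series_fin _ _ N.+1); first last.
- by move=> k kN; rewrite P_first_rrs ltnNge kN mulr0.
- by move=> k; rewrite P_first_rrs mulr_ge0 ?invr_ge0.
rewrite (eq_bigr (fun _ => N.+1%:R^-1)); last by move=> k _; rewrite P_first_rrs ltn_ord mulr1.
rewrite sumr_const card_ord -[_ *+ N.+1]mulr_natr mulVf ?pnatr_eq0 // eqxx.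
rewrite (@series_fin _ _ N.+1); first last.
- by move=> k kN; rewrite P_first_rrs ltnNge kN !mulr0.
- by move=> k; rewrite P_first_rrs !mulr_ge0 ?invr_ge0.
congr (_%:E); rewrite /Trr mulr_sumr; apply: eq_bigr => k _.
by rewrite P_first_rrs ltn_ord mulr1 mulrC.
Qed.

Lemma P_test_rrs i t : P_test rrs i t = N.+1%:R^-1.
Proof.
rewrite /P_test big_mkcond sum_tupleS.
transitivity (N.+1%:R^-1 * \sum_(j : 'I_N.+1) (nat_of_bool ((j + t) %% N.+1 == i)%N)%:R : R);
  last by rewrite count_one // mulr1.
rewrite mulr_sumr; apply: eq_bigr => j _.
rewrite (bigD1 (ct j t)) //= big1 ?addr0.
  rewrite pr_rrs_cons map_val_ct eqxx mulr1.
  rewrite -(inj_eq val_inj) tnth_ct /=.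
  by case: ifP => _; rewrite ?mulr0 ?mulr1.
move=> w nw; case: ifP => // _.
rewrite pr_rrs_cons.
case: eqP => [hw|]; last by rewrite mulr0.
by case/eqP: nw; apply: val_inj; apply: (inj_map val_inj); rewrite hw map_val_ct.
Qed.

End D.

Lemma cesaro_cst (R : realType) (u : nat -> R) c : (forall t, u t = c) ->
  Defs.cesaro u = fun _ => c.
Proof.
move=> uc; apply/funext => H; rewrite /Defs.cesaro.
rewrite (eq_bigr (fun _ => c)) // sumr_const card_ord -[c *+ _]mulr_natr.
by rewrite mulfK // pnatr_eq0.
Qed.

Lemma rrs_valid (R : realType) N : valid (sing N.+1) (@rrs R N).
Proof.
split.
- exact: rrs_stoch.
- by exists (@Trr R N) => e t; rewrite T_det_rrs.
- move=> e; rewrite (@cesaro_cst _ _ (@Trr R N)); first exact: is_cvg_cst.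
  by move=> t; rewrite /Treal T_det_rrs.
- move=> i; rewrite (@cesaro_cst _ _ N.+1%:R^-1); first exact: is_cvg_cst.
  by move=> t; rewrite P_test_rrs.
Qed.

Lemma Et_rrs (R : realType) N e : Et (sing N.+1) (@rrs R N) e = @Trr R N.
Proof.
rewrite /Et (@cesaro_cst _ _ (@Trr R N)); first by rewrite lim_cst.
by move=> t; rewrite /Treal T_det_rrs.
Qed.


Lemma prod_bool (R : realType) (I : finType) (b : I -> bool) :
  \prod_i ((nat_of_bool (b i))%:R : R) = (nat_of_bool [forall i, b i])%:R.
Proof.
rewrite (_ : [forall i, b i] = \big[andb/true]_i b i); last by symmetry; exact: big_andE.
apply: (big_rec2 (fun (x : R) (y : bool) => x = (nat_of_bool y)%:R)) => // i x y _ ->.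
by rewrite -natrM mulnb.
Qed.

Section E.
Variables (R : realType) (n m : nat) (s : 'I_m -> {set 'I_n}).
Variables (q : 'I_m -> R) (sc : schedule R m).
Hypothesis memo : forall h, sc h = q.

Lemma pr_memo (w : seq 'I_m) h : pr_from sc h w = \prod_(j <- w) q j.
Proof.
by elim: w h => [|j w IH] h /=; rewrite ?big_nil // big_cons IH memo.
Qed.

Variables (e : 'I_n) (t k : nat).
Definition cnd (i : nat) (j : 'I_m) :=
  ((t <= i < t + k)%N ==> (e \notin s j)) && ((i == t + k)%N ==> (e \in s j)).

Definition pe := \sum_(j | e \in s j) q j.

Lemma P_first_memo0 : P_first s sc e t k =
  \prod_(i < (t + k).+1) \sum_(j : 'I_m) q j * (nat_of_bool (cnd i j))%:R.
Proof.
rewrite -(@prod_tuple R m _ (fun (i : nat) j => q j * (nat_of_bool (cnd i j))%:R)) /P_first big_mkcond; apply: eq_bigr => w _.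
rewrite /pr pr_memo big_tuple.
rewrite big_split /= prod_bool.
have -> : [forall i : 'I_(t + k).+1, cnd i (tnth w i)] =
  [forall i : 'I_(t + k).+1, (t <= i < t + k)%N ==> (e \notin s (tnth w i))]
  && (e \in s (tnth w ord_max)).
  apply/idP/idP.
    move/forallP => H; apply/andP; split.
      by apply/forallP => i; case/andP: (H i).
    by case/andP: (H ord_max) => _ /implyP; apply.
  case/andP => /forallP A B; apply/forallP => i; apply/andP; split; first exact: A.
  by apply/implyP => /eqP hi; have -> : i = ord_max by apply: val_inj.
by case: ifP => _; rewrite ?mulr1 ?mulr0.
Qed.


Lemma sum_indic (b : 'I_m -> bool) :
  \sum_(j : 'I_m) q j * (nat_of_bool (b j))%:R = \sum_(j | b j) q j.
Proof. by rewrite [RHS]big_mkcond; apply: eq_bigr => j _; case: (b j); rewrite ?mulr1 ?mulr0. Qed.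

Hypothesis q1 : \sum_(j : 'I_m) q j = 1.

Lemma g_val (i : nat) : (i <= t + k)%N ->
  \sum_(j : 'I_m) q j * (nat_of_bool (cnd i j))%:R =
  if (i < t)%N then 1 else if (i < t + k)%N then 1 - pe else pe.
Proof.
move=> ik; rewrite /cnd; case: (ltnP i t) => it.
  transitivity (\sum_(j : 'I_m) q j); last exact: q1.
  apply: eq_bigr => j _.
  have -> : (i == t + k)%N = false by apply/negbTE; lia.
  by rewrite mulr1.
case: (ltnP i (t + k)) => ik2.
  transitivity (\sum_(j : 'I_m) q j * (nat_of_bool (e \notin s j))%:R).
    apply: eq_bigr => j _.
    have -> : (i == t + k)%N = false by apply/negbTE; lia.
    by rewrite /= andbT.
  transitivity (\sum_(j : 'I_m) q j - \sum_(j : 'I_m) q j * (nat_of_bool (e \in s j))%:R).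
    rewrite -sumrB; apply: eq_bigr => j _.
    by case: (e \in s j); rewrite ?mulr0 ?mulr1 ?subr0 ?subrr.
  by rewrite q1 sum_indic.
transitivity (\sum_(j : 'I_m) q j * (nat_of_bool (e \in s j))%:R); last by rewrite sum_indic.
apply: eq_bigr => j _.
have -> : (i == t + k)%N = true by apply/eqP; lia.
by rewrite /= ?andbT ?andbF.
Qed.

Lemma P_first_memo : P_first s sc e t k = pe * (1 - pe) ^+ k.
Proof.
rewrite P_first_memo0 big_ord_recr /= g_val // ltnn.
rewrite (_ : t + k < t = false)%N; last by apply/negbTE; lia.
rewrite mulrC; congr (_ * _).
rewrite (eq_bigr (fun i : 'I_(t + k) => if (i < t)%N then 1 else 1 - pe)); last first.
  by move=> i _; rewrite g_val ?ltn_ord // ltnW.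
rewrite -(big_mkord xpredT (fun i => if (i < t)%N then 1 else 1 - pe)).
rewrite (big_cat_nat _ (leq_addr k t)) //= big1_seq ?mul1r; last first.
  by move=> i /andP[_]; rewrite mem_index_iota => /andP[_ ->].
rewrite (eq_big_seq (fun _ => 1 - pe)); last first.
  by move=> i; rewrite mem_index_iota => /andP[ti _]; rewrite ltnNge ti.
by rewrite prodr_const_nat addKn.
Qed.

End E.

Lemma F_geom (R : realType) (p : R) K :
  \sum_(i < K) (1 - \sum_(j < i) (p * (1 - p) ^+ j)) = \sum_(i < K) (1 - p) ^+ i.
Proof.
apply: eq_bigr => i _; elim: (nat_of_ord i) => [|a IH]; first by rewrite big_ord0 subr0 expr0.
by rewrite big_ord_recr /= opprD addrA IH exprS; lra.
Qed.

Lemma geom_partial (R : realType) (z : R) K : 0 <= z < 1 ->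
  \sum_(i < K) z ^+ i = (1 - z ^+ K) / (1 - z).
Proof.
move=> /andP[z0 z1].
have := congr1 (fun f => f K) (@geometric_seriesE R 1 z (negbT (lt_eqF z1))).
rewrite /= /series /geometric /= mul1r => <-.
by rewrite big_mkord; apply: eq_bigr => i _; rewrite mul1r.
Qed.

Lemma geom_partial_le (R : realType) (z : R) K : 0 <= z < 1 ->
  \sum_(i < K) z ^+ i <= (1 - z)^-1.
Proof.
move=> hz; rewrite geom_partial //; case/andP: hz => z0 z1.
rewrite ler_pdivrMr ?subr_gt0 // mulVf ?subr_eq0 ?gt_eqF //.
by rewrite gerBl exprn_ge0.
Qed.

Lemma geom_cvg (R : realType) (z : R) : 0 <= z < 1 ->
  ((fun K => \sum_(i < K) z ^+ i) @ \oo --> (1 - z)^-1)%classic.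
Proof.
case/andP => z0 z1.
have := @cvg_geometric_series R 1 z; rewrite ger0_norm // mul1r => /(_ z1).
apply: cvg_trans; apply: near_eq_cvg; apply: nearW => K /=.
by rewrite /series /geometric /= big_mkord; apply: eq_bigr => i _; rewrite mul1r.
Qed.

Section E2.
Variables (R : realType) (n m : nat) (s : 'I_m -> {set 'I_n}).
Variables (q : 'I_m -> R) (sc : schedule R m).
Hypothesis memo : forall h, sc h = q.
Hypothesis Hs : is_stochastic sc.

Lemma q_ge0 j : 0 <= q j.
Proof. by case: Hs => H _; rewrite -(memo [::]) H. Qed.

Lemma q_sum1 : \sum_(j : 'I_m) q j = 1.
Proof. by case: Hs => _ H; rewrite -(H [::]) (memo [::]). Qed.

Lemma pe_ge0 e : 0 <= pe s q e.
Proof. by apply: sumr_ge0 => j _; exact: q_ge0. Qed.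

Lemma pe_le1 e : pe s q e <= 1.
Proof.
rewrite -q_sum1 [X in _ <= X](bigID (fun j => e \in s j)) /= lerDl.
by apply: sumr_ge0 => j _; exact: q_ge0.
Qed.

Lemma P_first_m e t k : P_first s sc e t k = pe s q e * (1 - pe s q e) ^+ k.
Proof. by apply: P_first_memo => //; exact: q_sum1. Qed.

Lemma T_det_t e t : T_det s sc e t = T_det s sc e 0.
Proof.
have E : P_first s sc e t = P_first s sc e 0 by apply/funext => k; rewrite !P_first_m.
by rewrite /T_det E.
Qed.

Lemma Treal_t e t : Treal s sc e t = Treal s sc e 0.
Proof. by rewrite /Treal T_det_t. Qed.

Lemma Et_memo e : Et s sc e = Treal s sc e 0.
Proof. by rewrite /Et (cesaro_cst (c := Treal s sc e 0)) ?lim_cst // => t; exact: Treal_t. Qed.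

Lemma memo_lb e B : (T_det s sc e 0 <= B%:E)%E ->
  0 < pe s q e /\ (pe s q e)^-1 <= Treal s sc e 0.
Proof.
move=> HB; have [H1 _] := T_fin HB.
have p0 : 0 < pe s q e.
  rewrite lt_def pe_ge0 andbT; apply/eqP => p0; move: H1.
  rewrite eseries0; last by move=> k _ _; rewrite P_first_m p0 mul0r.
  by move=> h; have := congr1 fine h => /= /eqP; rewrite eq_sym oner_eq0.
split => //.
have z01 : 0 <= 1 - pe s q e < 1 by rewrite subr_ge0 pe_le1 /= gtrBl.
have pp : 1 - (1 - pe s q e) = pe s q e by lra.
have := geom_cvg z01; rewrite pp => hc.
rewrite -(cvg_lim _ hc) //; apply: limr_le; first by apply/cvg_ex; eexists; exact: hc.
apply: nearW => K /=; rewrite -F_geom.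
have := Treal_ge Hs HB K.
by under eq_bigr do under eq_bigr do rewrite P_first_m.
Qed.

Lemma memo_ub e : 0 < pe s q e ->
  (T_det s sc e 0 <= ((pe s q e)^-1)%:E)%E.
Proof.
move=> p0.
have z01 : 0 <= 1 - pe s q e < 1 by rewrite subr_ge0 pe_le1 /= gtrBl.
have HP : (\sum_(k <oo) (P_first s sc e 0 k)%:E = 1)%E.
  under eq_fun do under eq_bigr do rewrite P_first_m.
  rewrite (_ : (fun _ => _) = EFin \o series (geometric (pe s q e) (1 - pe s q e))); last first.
    by apply/funext => K /=; rewrite sumEFin.
  have hz : `|1 - pe s q e| < 1 by rewrite ger0_norm; case/andP: z01.
  rewrite EFin_lim; last exact: is_cvg_geometric_series.
  rewrite (cvg_lim _ (@cvg_geometric_series R _ _ hz)) //.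
  have pp : 1 - (1 - pe s q e) = pe s q e by lra.
  by rewrite pp divff // gt_eqF.
rewrite /T_det HP eqxx.
apply: abel_ub.
- move=> k; rewrite P_first_m.
  by rewrite mulr_ge0 ?pe_ge0 // exprn_ge0 // subr_ge0 pe_le1.
- exact: HP.
move=> K; under eq_bigr do under eq_bigr do rewrite P_first_m.
rewrite F_geom; apply: le_trans (geom_partial_le K z01) _.
have pp : 1 - (1 - pe s q e) = pe s q e by lra.
by rewrite pp.
Qed.

End E2.

Lemma P_test_memo (R : realType) m (q : 'I_m -> R) (sc : schedule R m) :
  (forall h, sc h = q) -> is_stochastic sc -> forall i t, P_test sc i t = q i.
Proof.
move=> memo Hs i t.
have q1 : \sum_(j : 'I_m) q j = 1 by case: Hs => _ H; rewrite -(H [::]) (memo [::]).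
transitivity (\prod_(j < t.+1) \sum_(x : 'I_m) q x * (nat_of_bool ((j == t :> nat) ==> (x == i)))%:R).
  rewrite -(@prod_tuple R m _ (fun (j : nat) x => q x * (nat_of_bool ((j == t)%N ==> (x == i)))%:R)).
  rewrite /P_test big_mkcond; apply: eq_bigr => w _.
  rewrite /pr (pr_memo memo) big_tuple big_split /= prod_bool.
  have -> : [forall j : 'I_t.+1, (j == t :> nat) ==> (tnth w j == i)] = (tnth w ord_max == i).
    apply/idP/idP; first by move/forallP/(_ ord_max)/implyP; apply.
    move=> h; apply/forallP => j; apply/implyP => /eqP hj.
    by have -> : j = ord_max by apply: val_inj.
  by case: ifP => _; rewrite ?mulr1 ?mulr0.
rewrite big_ord_recr /= eqxx big1 ?mul1r.
  rewrite (bigD1 i) //= eqxx mulr1 big1 ?addr0 // => j /negbTE ->.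
  by rewrite mulr0.
move=> j _; rewrite (ltn_eqF (ltn_ord j)) /=; transitivity (\sum_(x : 'I_m) q x); last exact: q1.
apply: eq_bigr => x _.
by rewrite mulr1.
Qed.

Section F.
Variables (R : realType) (N : nat).

Lemma sum_rev : \sum_(i < N.+1) (N.+1%:R - i%:R) = \sum_(k < N.+1) (k.+1)%:R :> R.
Proof.
rewrite (reindex_inj rev_ord_inj) /=; apply: eq_bigr => i _.
have hi : (i <= N)%N by rewrite -ltnS.
rewrite subSS natrB // -!natr1; lra.
Qed.

Lemma sum_tri M : \sum_(k < M) (k.+1)%:R = (M%:R * M.+1%:R) / 2 :> R.
Proof.
elim: M => [|M IH]; first by rewrite big_ord0 mul0r mul0r.
rewrite big_ord_recr /= IH.
rewrite -!natr1; field; lra.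
Qed.

Lemma Trr_val : Trr R N = N.+2%:R / 2.
Proof.
rewrite /Trr sum_tri; field.
by rewrite addrC natr1 pnatr_eq0.
Qed.

Lemma objSUM_le_MAX (sc : schedule R N.+1) :
  obj_SUM (sing N.+1) sc <= obj_MAX (sing N.+1) sc.
Proof.
rewrite /obj_SUM.
apply: (@le_trans _ _ (\sum_(e : 'I_N.+1) N.+1%:R^-1 * obj_MAX (sing N.+1) sc)).
  apply: ler_sum => e _; apply: ler_wpM2l; first by rewrite invr_ge0.
  exact: le_bigmax.
rewrite sumr_const card_ord -[_ *+ N.+1]mulr_natr mulrC mulrA mulfV ?pnatr_eq0 //.
by rewrite mul1r.
Qed.

Lemma objMAX_le (sc : schedule R N.+1) c : 0 <= c ->
  (forall e, Et (sing N.+1) sc e <= c) -> obj_MAX (sing N.+1) sc <= c.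
Proof. by move=> c0 H; apply: bigmax_le. Qed.

End F.

Section G.
Variables (R : realType) (N : nat).

Lemma pe_sing (q : 'I_N.+1 -> R) e : pe (sing N.+1) q e = q e.
Proof.
rewrite /pe (big_pred1 e) // => j /=.
by rewrite /sing finset.in_set1 eq_sym.
Qed.

Lemma memoSUM_lb (sc : schedule R N.+1) :
  valid (sing N.+1) sc -> memoryless sc -> N.+1%:R <= obj_SUM (sing N.+1) sc.
Proof.
move=> [Hs [B HB] _ _] [q memo].
have q1 := q_sum1 memo Hs.
have H e : 0 < q e /\ (q e)^-1 <= Et (sing N.+1) sc e.
  have := memo_lb memo Hs (HB e 0); rewrite pe_sing => -[p0 hp].
  by rewrite (Et_memo (sing N.+1) memo Hs).
set n := N.+1%:R.
have n0 : 0 < n by rewrite ltr0n.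
apply: (@le_trans _ _ (\sum_(e : 'I_N.+1) n^-1 * (2 * n - n ^+ 2 * q e))); last first.
  apply: ler_sum => e _; apply: ler_wpM2l; first by rewrite invr_ge0 ltW.
  have [qe0 hq] := H e; apply: le_trans hq.
  rewrite -[(q e)^-1]div1r ler_pdivlMr //.
  have : 0 <= (n * q e - 1) ^+ 2 by exact: sqr_ge0.
  lra.
rewrite -mulr_sumr sumrB sumr_const card_ord -mulr_sumr q1 mulr1.
rewrite -/n -[_ *+ N.+1]mulr_natr -/n.
have nn : n != 0 by rewrite gt_eqF.
rewrite expr2 (_ : 2 * n * n - n * n = n * n); last by ring.
by rewrite mulrA mulVf // mul1r.
Qed.

Definition usc : schedule R N.+1 := fun _ _ => N.+1%:R^-1.

Lemma usc_stoch : is_stochastic usc.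
Proof.
split => [h j|h]; first by rewrite /usc invr_ge0.
by rewrite /usc sumr_const card_ord -[_ *+ N.+1]mulr_natr mulVf // pnatr_eq0.
Qed.

Lemma usc_memo : forall h, usc h = fun _ => N.+1%:R^-1.
Proof. by []. Qed.

Lemma usc_T e : (T_det (sing N.+1) usc e 0 <= N.+1%:R%:E)%E.
Proof.
have := @memo_ub R N.+1 N.+1 (sing N.+1) _ _ usc_memo usc_stoch e.
by rewrite pe_sing invrK; apply; rewrite invr_gt0 ltr0n.
Qed.

Lemma usc_valid : valid (sing N.+1) usc.
Proof.
split.
- exact: usc_stoch.
- by exists N.+1%:R => e t; rewrite (T_det_t (sing N.+1) usc_memo usc_stoch) usc_T.
- move=> e; rewrite (@cesaro_cst _ _ (Treal (sing N.+1) usc e 0)); first exact: is_cvg_cst.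
  by move=> t; rewrite (Treal_t (sing N.+1) usc_memo usc_stoch).
- move=> i; rewrite (@cesaro_cst _ _ N.+1%:R^-1); first exact: is_cvg_cst.
  by move=> t; rewrite (P_test_memo usc_memo usc_stoch).
Qed.

Lemma usc_MAX : obj_MAX (sing N.+1) usc <= N.+1%:R.
Proof.
apply: objMAX_le => // e.
rewrite (Et_memo (sing N.+1) usc_memo usc_stoch) -lee_fin.
rewrite /Treal fineK; first exact: usc_T.
rewrite ge0_fin_numE; first by apply: le_lt_trans (usc_T e) (ltry _).
rewrite /T_det; case: ifP => _ //.
by apply: nneseries_ge0 => k _ _; rewrite lee_fin mulr_ge0 // P_first_ge0 //; exact: usc_stoch.
Qed.

End G.

Section H.
Variables (R : realType) (N : nat).
Local Open Scope classical_set_scope.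

Lemma opt_SUM_val : opt_SUM R (sing N.+1) = (Trr R N)%:E.
Proof.
apply/eqP; rewrite eq_le; apply/andP; split.
  apply: ge_ereal_inf; exists (obj_SUM (sing N.+1) (@rrs R N))%:E.
    by exists (@rrs R N) => //; exact: rrs_valid.
  rewrite lee_fin; apply: le_trans (objSUM_le_MAX _) _.
  by apply: objMAX_le => [|e]; rewrite ?Et_rrs // Trr_val divr_ge0.
apply: le_ereal_inf_tmp => _ [sc /= Hv <-]; rewrite lee_fin.
have := objSUM_lb (ltn0Sn N) Hv; by rewrite sum_rev.
Qed.

Lemma opt_MAX_val : opt_MAX R (sing N.+1) = (Trr R N)%:E.
Proof.
apply/eqP; rewrite eq_le; apply/andP; split.
  apply: ge_ereal_inf; exists (obj_MAX (sing N.+1) (@rrs R N))%:E.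
    by exists (@rrs R N) => //; exact: rrs_valid.
  rewrite lee_fin.
  by apply: objMAX_le => [|e]; rewrite ?Et_rrs // Trr_val divr_ge0.
apply: le_ereal_inf_tmp => _ [sc /= Hv <-]; rewrite lee_fin.
apply: le_trans (objSUM_le_MAX _).
have := objSUM_lb (ltn0Sn N) Hv; by rewrite sum_rev.
Qed.

Lemma optM_SUM_val : optM_SUM R (sing N.+1) = (N.+1%:R)%:E.
Proof.
apply/eqP; rewrite eq_le; apply/andP; split.
  apply: ge_ereal_inf; exists (obj_SUM (sing N.+1) (@usc R N))%:E.
    exists (@usc R N) => //; split; first exact: usc_valid.
    by exists (fun _ => N.+1%:R^-1).
  rewrite lee_fin; apply: le_trans (objSUM_le_MAX _) _; exact: usc_MAX.
apply: le_ereal_inf_tmp => _ [sc /= [Hv Hm] <-]; rewrite lee_fin.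
exact: memoSUM_lb.
Qed.

Lemma optM_MAX_val : optM_MAX R (sing N.+1) = (N.+1%:R)%:E.
Proof.
apply/eqP; rewrite eq_le; apply/andP; split.
  apply: ge_ereal_inf; exists (obj_MAX (sing N.+1) (@usc R N))%:E.
    exists (@usc R N) => //; split; first exact: usc_valid.
    by exists (fun _ => N.+1%:R^-1).
  rewrite lee_fin; exact: usc_MAX.
apply: le_ereal_inf_tmp => _ [sc /= [Hv Hm] <-]; rewrite lee_fin.
apply: le_trans (objSUM_le_MAX _); exact: memoSUM_lb.
Qed.

End H.

Theorem lemma6 (R : realType) (eps : R) : 0 < eps ->
  exists (n m : nat) (s : 'I_m -> {set 'I_n}),
    [/\ (0 < n)%N,
        (forall e : 'I_n, exists i : 'I_m, e \in s i),
        optM_MAX R s = optM_SUM R s,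
        ((2 - eps)%:E * opt_MAX R s <= optM_SUM R s)%E &
        ((2 - eps)%:E * opt_MAX R s = (2 - eps)%:E * opt_SUM R s)%E].
Proof.
move=> e0.
set N := Num.Def.archi_bound (2 / eps).
have hN : 2 / eps < N%:R by apply: archi_boundP; rewrite divr_ge0 // ltW.
clearbody N.
exists N.+1, N.+1, (sing N.+1); split => //.
- by move=> e; exists e; rewrite /sing finset.in_set1.
- by rewrite optM_MAX_val optM_SUM_val.
- rewrite opt_MAX_val optM_SUM_val -EFinM lee_fin Trr_val.
  have : 2 < eps * N%:R by rewrite mulrC -ltr_pdivrMr.
  rewrite -[N.+2]addn2 -[N.+1]addn1 !natrD; nra.
- by rewrite opt_MAX_val opt_SUM_val.
Qed.
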